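(* Let $\Phi$ be an action of the Lie $\infty$-algebra $(E,M_E)$ on the Lie $\infty$-algebra $(V,M_V)$, and let $\tilde T:\bar S(\bar S(V))\to\bar S(E)$ be an $\mathcal O$-operator with respect to the induced representation $\rho$ of $E$ on $\bar S(V)$, i.e. a comorphism satisfying, for all $w\in\bar S(\bar S(V))$, $M_E\circ\tilde T(w)=\tilde T\big(\Phi^{\mathrm d}_{\tilde T(w_{(1)})}w_{(2)}+M_V^{\mathrm d}(w)\big)$ (with the first term interpreted as $0$ for $w\in S^1(\bar S(V))$). Then $T=\tilde T\circ I:\bar S(V)\to\bar S(E)$ is an $\mathcal O$-operator on $E$ with respect to the action $\Phi$.
   Context: Graded vector spaces are $\mathbb Z$-graded, finite dimensional over $\mathbb R$ or $\mathbb C$, with Koszul signs. $\bar S(W)$ is the reduced graded symmetric coalgebra with unshuffle coproduct $\Delta$, Sweedler notation $\Delta(w)=w_{(1)}\otimes w_{(2)}$. A comorphism is a degree $0$ coalgebra morphism. A Lie $\infty$-algebra $(E,M_E)$ is a degree $+1$ coderivation of $\bar S(E)$ with $M_E^2=0$. $\mathrm{Coder}(\bar S(V))[1]$ is the symmetric DGLA with $\partial_{M_V}Q=-M_VQ+(-1)^{\deg Q}QM_V$, $[Q,P]=(-1)^{\deg Q}(QP-(-1)^{\deg Q\deg P}PQ)$. An action of $(E,M_E)$ on $(V,M_V)$ is a degree $+1$ linear map $\bar S(E)\to\mathrm{Coder}(\bar S(V))$, $x\mapsto\Phi_x$, with $\Phi_{M_E(x)}=\partial_{M_V}\Phi_x+\frac12[\Phi_{x_{(1)}},\Phi_{x_{(2)}}]$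 for all $x$ (last term $0$ for $x\in E$). The induced representation is $\rho(x)=\Phi_x\in\mathrm{End}(\bar S(V))$. For a linear map $D:\bar S(V)\to\bar S(V)$, $D^{\mathrm d}$ denotes the coderivation (and derivation) of $\bar S(\bar S(V))$ extending $D$, i.e. determined by the map equal to $D$ on $S^1(\bar S(V))$ and $0$ on $S^{\ge2}(\bar S(V))$; $\Phi^{\mathrm d}_x:=(\Phi_x)^{\mathrm d}$. $I:\bar S(V)\to\bar S(\bar S(V))$ is the comorphism determined by the identity map of $\bar S(V)$. For a degree $0$ map $T:\bar S(V)\to\bar S(E)$, $\Phi^T$ is the map $\bar S(V)\to\bar S(V)$ with $\Phi^T(v)=0$ for $v\in V$ and $\Phi^T(v)=\Phi_{T(v_{(1)})}v_{(2)}$ for $v\in S^{\ge2}(V)$. An $\mathcal O$-operator on $E$ with respect to $\Phi$ is a comorphism $T:\bar S(V)\to\bar S(E)$ with $M_E\circ T=T\circ(\Phi^T+M_V)$. *)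

(* Defs.v *)
From HB Require Import structures.
From mathcomp Require Import all_boot all_order all_algebra.
From mathcomp Require Import finmap monalg.
Set Implicit Arguments. Unset Strict Implicit. Unset Printing Implicit Defensive.
Import Order.TTheory GRing.Theory Num.Theory.
Local Open Scope ring_scope.

(* A graded vector space is modelled by a homogeneous basis: a choiceType B *)
(* with a degree function.  [gb_le] is an auxiliary total order used only  *)
(* to pick canonical monomials, and [gb_ok] selects the basis elements     *)
(* that are actually present (always true for a plain basis).             *)
Record gbasis (B : choiceType) := GBasis {
  gb_le : rel B; gb_deg : B -> int; gb_ok : pred B }.

Fixpoint lexrel (B : eqType) (le : rel B) (s t : seq B) : bool :=
  match s, t with
  | [::], _ => true
  | _ :: _, [::] => false
  | a :: s', b :: t' => if a == b then lexrel le s' t' else le a b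
  end.

Section Gen.
Variable R : numFieldType.

Definition koz (a b : int) : R :=
  if odd `|a|%N && odd `|b|%N then -1 else 1.

Definition islin (U W : lmodType R) (f : U -> W) :=
  forall (a : R) (x y : U), f (a *: x + y) = a *: f x + f y.

Variable B : choiceType.
Variable G : gbasis B.

(* Ambient spaces: T(W) with basis seq B, and T(W) (x) T(W). Elements of   *)
(* the reduced symmetric coalgebra are the vectors supported on canonical *)
(* monomials (sorted words, odd basis vectors at most once).              *)
Definition Vec := {malg R[seq B]}.
Definition Ten := {malg R[(seq B * seq B)%type]}.

Definition degS (s : seq B) : int := \sum_(x <- s) gb_deg G x.

Definition canon (s : seq B) : bool :=
  [&& s != [::], all (gb_ok G) s, sorted (gb_le G) s &
      all (fun x => odd `|gb_deg G x|%N ==> (count_mem x s <= 1)%N) s].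

Definition inS (x : Vec) : Prop := forall s, s \in msupp x -> canon s.
Definition homog (d : int) (x : Vec) : Prop :=
  forall s, s \in msupp x -> degS s = d.

Definition pair_sign (s : seq B) (P : 'I_(size s) -> 'I_(size s) -> bool) : R :=
  \prod_(i < size s) \prod_(j < size s | (i < j)%N && P i j)
     koz (gb_deg G (tnth (in_tuple s) i)) (gb_deg G (tnth (in_tuple s) j)).

(* Koszul sign of the sorting permutation *)
Definition sort_sign (s : seq B) : R :=
  pair_sign (fun i j => ~~ gb_le G (tnth (in_tuple s) i) (tnth (in_tuple s) j)).

(* the monomial s_1 ... s_n of the graded symmetric coalgebra *)
Definition mono (s : seq B) : Vec :=
  if canon (sort (gb_le G) s) then sort_sign s *: << sort (gb_le G) s >> else 0.

Definition lin (W : lmodType R) (f : seq B -> W) (x : Vec) : W :=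
  \sum_(s <- msupp x) x@_s *: f s.

Definition tens (x y : Vec) : Ten :=
  \sum_(s <- msupp x) \sum_(t <- msupp y) (x@_s * y@_t) *: << (s, t) >>.

(* Koszul sign of the unshuffle selected by the mask b *)
Definition unsh_sign (b : seq bool) (s : seq B) : R :=
  pair_sign (fun i j : 'I_(size s) => ~~ nth false b i && nth false b j).

Definition cop_b (s : seq B) : Ten :=
  \sum_(b : (size s).-tuple bool | (true \in b) && (false \in b))
     unsh_sign b s *: tens (mono (mask b s)) (mono (mask (map negb b) s)).

Definition cop (x : Vec) : Ten := lin cop_b x.

Definition coder (d : int) (Q : Vec -> Vec) : Prop :=
  [/\ islin Q, forall x, inS x -> inS (Q x),
      forall k x, inS x -> homog k x -> homog (k + d) (Q x) &
      forall x, inS x -> cop (Q x) =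
        \sum_(p <- msupp (cop x)) ((cop x)@_p) *: tens (Q << p.1 >>) << p.2 >>
      + \sum_(p <- msupp (cop x)) ((cop x)@_p * koz d (degS p.1))
            *: tens << p.1 >> (Q << p.2 >>)].

Definition LieInf (M : Vec -> Vec) : Prop :=
  coder 1 M /\ forall x, inS x -> M (M x) = 0.

End Gen.

Section Maps.
Variable R : numFieldType.
Variables (B C : choiceType) (GB : gbasis B) (GC : gbasis C).

Definition comorph (F : Vec R B -> Vec R C) : Prop :=
  [/\ islin F, forall x, inS GB x -> inS GC (F x),
      forall d x, inS GB x -> homog GB d x -> homog GC d (F x) &
      forall x, inS GB x -> cop GC (F x) =
        \sum_(p <- msupp (cop GB x)) ((cop GB x)@_p) *: tens (F << p.1 >>) (F << p.2 >>)].

(* x |-> Phi_x, given by its values on the basis monomials m *)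
Definition Phi_at (Phi : seq B -> Vec R C -> Vec R C) (x : Vec R B) (y : Vec R C) :=
  \sum_(m <- msupp x) x@_m *: Phi m y.

(* Phi^T(v) = Phi_{T(v_(1))} v_(2)  (0 on V since the reduced coproduct  *)
(* vanishes there)                                                       *)
Definition PhiT (Phi : seq B -> Vec R C -> Vec R C) (T : Vec R C -> Vec R B)
  (v : Vec R C) : Vec R C :=
  \sum_(p <- msupp (cop GC v)) (cop GC v)@_p *: Phi_at Phi (T << p.1 >>) << p.2 >>.

Definition action (ME : Vec R B -> Vec R B) (MV : Vec R C -> Vec R C)
  (Phi : seq B -> Vec R C -> Vec R C) : Prop :=
  (forall m, canon GB m -> coder GC (degS GB m + 1) (Phi m)) /\
  forall x y, inS GB x -> inS GC y ->
    Phi_at Phi (ME x) y =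
      \sum_(m <- msupp x) x@_m *:
          (- MV (Phi m y) + koz R 1 (degS GB m + 1) *: Phi m (MV y))
    + 2^-1 *: \sum_(p <- msupp (cop GB x)) (cop GB x)@_p *:
          (koz R 1 (degS GB p.1 + 1) *:
             (Phi p.1 (Phi p.2 y)
              - koz R (degS GB p.1 + 1) (degS GB p.2 + 1) *: Phi p.2 (Phi p.1 y))).
End Maps.

Definition Oop (R : numFieldType) (B C : choiceType) (GB : gbasis B) (GC : gbasis C)
  (ME : Vec R B -> Vec R B) (MV : Vec R C -> Vec R C)
  (Phi : seq B -> Vec R C -> Vec R C) (T : Vec R C -> Vec R B) : Prop :=
  @comorph R C B GC GB T /\
  forall v, inS GC v -> ME (T v) = T (PhiT GC Phi T v + MV v).


Section Outer.
Variable R : numFieldType.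
Variables (B : choiceType) (G : gbasis B).

(* basis data of S(W) (canonical monomials), used to build S(S(W)) *)
Definition outer : gbasis (seq B) :=
  GBasis (lexrel (gb_le G)) (degS G) (canon G).

(* projection S(S(W)) -> S^1(S(W)) = S(W) *)
Definition pr1 (w : Vec R (seq B)) : Vec R B :=
  \sum_(u <- msupp w | size u == 1%N) w@_u *: << head [::] u >>.

(* Dd = D^d : the coderivation of S(S(W)) of degree d extending D *)
Definition extends (d : int) (D : Vec R B -> Vec R B)
  (Dd : Vec R (seq B) -> Vec R (seq B)) : Prop :=
  coder outer d Dd /\
  forall u, canon outer u ->
    pr1 (Dd << u >>) = if size u == 1%N then D << head [::] u >> else 0.

(* I : the comorphism S(W) -> S(S(W)) determined by the identity *)
Definition is_I (I : Vec R B -> Vec R (seq B)) : Prop :=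
  comorph G outer I /\ forall x, inS G x -> pr1 (I x) = x.
End Outer.

Definition fin_gb (n : nat) (deg : 'I_n -> int) : gbasis 'I_n :=
  GBasis (fun i j : 'I_n => (i <= j)%N) deg predT.

(* Main.v *)
Require Import Defs.
From HB Require Import structures.
From mathcomp Require Import all_boot all_order all_algebra.
From mathcomp Require Import finmap monalg.
Set Implicit Arguments. Unset Strict Implicit. Unset Printing Implicit Defensive.
Import Order.TTheory GRing.Theory Num.Theory.
Local Open Scope ring_scope.

Section LinG.
Variables (R : numFieldType) (K : choiceType).

Lemma scaleU (c : R) (k : K) : c *: (<< k >> : {malg R[K]}) = << c *g k >>.
Proof. by apply/malgP => k'; rewrite mcoeffZ !mcoeffU; case: eqP; rewrite ?mulr1 ?mulr0. Qed.

Section W.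
Variable W : lmodType R.
Definition linG (f : K -> W) (g : {malg R[K]}) : W := \sum_(k <- msupp g) g@_k *: f k.

Lemma linGw f g (d : {fset K}) : (msupp g `<=` d)%fset -> linG f g = \sum_(k <- d) g@_k *: f k.
Proof.
move=> sub; rewrite /linG (big_fset_incl _ sub) // => k _ kn.
by rewrite mcoeff_outdom // scale0r.
Qed.

Lemma linGD f g1 g2 : linG f (g1 + g2) = linG f g1 + linG f g2.
Proof.
rewrite (linGw f (msuppD_le g1 g2)) (linGw f (fsubsetUl (msupp g1) (msupp g2))).
rewrite (linGw f (fsubsetUr (msupp g1) (msupp g2))) -big_split.
by apply eq_bigr => k _; rewrite mcoeffD scalerDl.
Qed.

Lemma linGZ f c g : linG f (c *: g) = c *: linG f g.
Proof.
rewrite (linGw f (msuppZ_le c g)) /linG scaler_sumr; apply eq_bigr => k _.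
by rewrite mcoeffZ scalerA.
Qed.

Lemma linG0 f : linG f 0 = 0.
Proof. by rewrite /linG msupp0 big_seq_fset0. Qed.

Lemma linGN f g : linG f (- g) = - linG f g.
Proof. by rewrite -[- g]scaleN1r linGZ scaleN1r. Qed.

Lemma linGB f g1 g2 : linG f (g1 - g2) = linG f g1 - linG f g2.
Proof. by rewrite linGD linGN. Qed.

Lemma linGU f c k : linG f << c *g k >> = c *: f k.
Proof.
rewrite /linG msuppU; case: eqP => [->|_]; first by rewrite big_seq_fset0 scale0r.
by rewrite big_seq_fset1 mcoeffUU.
Qed.

Lemma linG1 f k : linG f << k >> = f k.
Proof. by rewrite linGU scale1r. Qed.

Lemma linG_sum f (I : Type) (r : seq I) (P : pred I) (F : I -> {malg R[K]}) :
  linG f (\sum_(i <- r | P i) F i) = \sum_(i <- r | P i) linG f (F i).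
Proof. exact: (big_morph _ (linGD f) (linG0 f)). Qed.

Lemma eq_linG f1 f2 g : (forall k, k \in msupp g -> f1 k = f2 k) -> linG f1 g = linG f2 g.
Proof. by move=> H; rewrite /linG big_seq_cond [RHS]big_seq_cond; apply eq_bigr => k /andP[/H -> _]. Qed.

Lemma linG_eq0 f g : (forall k, k \in msupp g -> f k = 0) -> linG f g = 0.
Proof. by move=> H; rewrite /linG big_seq big1 // => k /H ->; rewrite scaler0. Qed.

End W.

Lemma linG_id (g : {malg R[K]}) : linG (fun k => << k >>) g = g.
Proof. by rewrite [RHS]monalgE; apply eq_bigr => k _; rewrite scaleU. Qed.

Lemma islin0 (U W : lmodType R) (F : U -> W) : islin F -> F 0 = 0.
Proof. move=> H; have := H 1 0 0; rewrite !scale1r addr0 => /(congr1 (fun z => z - F 0)); rewrite subrr addrK; by move->. Qed.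
Lemma islinD (U W : lmodType R) (F : U -> W) : islin F -> forall x y, F (x + y) = F x + F y.
Proof. by move=> H x y; have := H 1 x y; rewrite !scale1r. Qed.
Lemma islinZ (U W : lmodType R) (F : U -> W) : islin F -> forall c x, F (c *: x) = c *: F x.
Proof. by move=> H c x; rewrite -[c *: x]addr0 H islin0 // addr0. Qed.
Lemma islinN (U W : lmodType R) (F : U -> W) : islin F -> forall x, F (- x) = - F x.
Proof. by move=> H x; rewrite -scaleN1r islinZ // scaleN1r. Qed.
Lemma islinB (U W : lmodType R) (F : U -> W) : islin F -> forall x y, F (x - y) = F x - F y.
Proof. by move=> H x y; rewrite islinD // islinN. Qed.
Lemma islin_sum (U W : lmodType R) (F : U -> W) : islin F ->
  forall (I : Type) (r : seq I) (P : pred I) (G : I -> U),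
  F (\sum_(i <- r | P i) G i) = \sum_(i <- r | P i) F (G i).
Proof. move=> H I r P G; exact: (big_morph _ (islinD H) (islin0 H)). Qed.

Lemma islin_linG (W W' : lmodType R) (F : W -> W') (f : K -> W) g :
  islin F -> F (linG f g) = linG (fun k => F (f k)) g.
Proof. by move=> H; rewrite /linG islin_sum //; apply eq_bigr => k _; rewrite islinZ. Qed.

Lemma islin_linGf (W : lmodType R) (f : K -> W) : islin (linG f).
Proof. by move=> a x y; rewrite linGD linGZ. Qed.

Lemma linG_decomp (W : lmodType R) (F : {malg R[K]} -> W) g :
  islin F -> F g = linG (fun k => F << k >>) g.
Proof. by move=> H; rewrite -islin_linG // linG_id. Qed.

Lemma msupp_sum (I : eqType) (r : seq I) (P : pred I) (F : I -> {malg R[K]}) k :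
  k \in msupp (\sum_(i <- r | P i) F i) -> exists2 i, (i \in r) && P i & k \in msupp (F i).
Proof.
elim: r => [|a r IH]; first by rewrite big_nil msupp0 inE.
rewrite big_cons; case Pa: (P a); [move/(fsubsetP (msuppD_le _ _))|].
  rewrite inE => /orP [H|/IH [i /andP[ir Pi] H]]; [exists a | exists i] => //; by rewrite inE ?eqxx ?ir ?Pa ?Pi ?orbT.
by move=> /IH [i /andP[ir Pi] H]; exists i => //; rewrite inE ir orbT.
Qed.

End LinG.

Lemma linG_linG (R : numFieldType) (K K2 : choiceType) (W : lmodType R) (h : K2 -> W) (F : K -> {malg R[K2]}) g :
  linG h (linG F g) = linG (fun k => linG h (F k)) g.
Proof. exact: islin_linG (islin_linGf h). Qed.


Lemma msupp_linG (R : numFieldType) (K K2 : choiceType) (f : K -> {malg R[K2]}) (g : {malg R[K]}) k :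
  k \in msupp (linG f g) -> exists2 i, i \in msupp g & k \in msupp (f i).
Proof.
move/msupp_sum => [i /andP[ig _]]; rewrite msuppZ; case: eqP => _; first by rewrite inE.
by exists i.
Qed.


Lemma linG_fun (R : numFieldType) (K : choiceType) (W : lmodType R) (f g : K -> W) a x :
  linG (fun k => a *: f k + g k) x = a *: linG f x + linG g x.
Proof.
rewrite /linG scaler_sumr -big_split; apply: eq_bigr => k _.
by rewrite scalerDr !scalerA mulrC.
Qed.

Lemma linG_add (R : numFieldType) (K : choiceType) (W : lmodType R) (f g : K -> W) x :
  linG (fun k => f k + g k) x = linG f x + linG g x.
Proof. by rewrite -[linG f x]scale1r -linG_fun; apply: eq_linG => k _; rewrite scale1r. Qed.

Lemma linG_swap (R : numFieldType) (K1 K2 : choiceType) (W : lmodType R)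
  (g : K1 -> K2 -> W) (X : {malg R[K1]}) (Y : {malg R[K2]}) :
  linG (fun t => linG (fun m => g m t) X) Y = linG (fun m => linG (fun t => g m t) Y) X.
Proof.
rewrite /linG; under eq_bigr do rewrite scaler_sumr.
rewrite exchange_big /=; apply: eq_bigr => m _; rewrite scaler_sumr; apply: eq_bigr => t _.
by rewrite !scalerA mulrC.
Qed.


Section Tens.
Variables (R : numFieldType) (B : choiceType).
Implicit Types (x y : Vec R B).

Lemma tensE x y : tens x y = linG (fun s => linG (fun t => << (s, t) >> : Ten R B) y) x.
Proof.
rewrite /tens /linG; apply eq_bigr => s _; rewrite scaler_sumr; apply eq_bigr => t _.
by rewrite scalerA.
Qed.

Lemma tens_linG (W : lmodType R) (h : (seq B * seq B) -> W) x y :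
  linG h (tens x y) = linG (fun s => linG (fun t => h (s, t)) y) x.
Proof.
rewrite tensE linG_linG; apply: eq_linG => s _; rewrite linG_linG.
by apply: eq_linG => t _; rewrite linG1.
Qed.

Lemma islin_tensl y : islin (fun x => tens x y).
Proof. by move=> a u v; rewrite !tensE linGD linGZ. Qed.

Lemma islin_tensr x : islin (fun y => tens x y).
Proof.
move=> a u v; rewrite !tensE -linG_fun; apply: eq_linG => s _.
by rewrite linGD linGZ.
Qed.

Lemma tensU (s t : seq B) : tens (<< s >> : Vec R B) << t >> = << (s, t) >>.
Proof. by rewrite tensE !linG1. Qed.

Lemma copE (G : gbasis B) x : cop G x = linG (cop_b R G) x.
Proof. by []. Qed.

Lemma islin_cop (G : gbasis B) : islin (cop (R:=R) G).
Proof. exact: islin_linGf. Qed.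

End Tens.

Lemma tens_linG_bil (R : numFieldType) (B C : choiceType) (F1 F2 : Vec R B -> Vec R C) (x y : Vec R B) :
  islin F1 -> islin F2 ->
  linG (fun p => tens (F1 << p.1 >>) (F2 << p.2 >>)) (tens x y) = tens (F1 x) (F2 y).
Proof.
move=> H1 H2; rewrite tens_linG /=.
have -> : tens (F1 x) (F2 y) = linG (fun s => tens (F1 << s >>) (F2 y)) x.
  rewrite {1}(linG_decomp x H1).
  exact: (@islin_linG _ _ _ _ (fun z => tens z (F2 y)) (fun k => F1 << k >>) x (islin_tensl (F2 y))).
apply: eq_linG => s _; rewrite [F2 y](linG_decomp y H2).
by rewrite (@islin_linG _ _ _ _ (fun z => tens (F1 << s >>) z) (fun k => F2 << k >>) y (islin_tensr _)).
Qed.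


Lemma linG_scalef (R : numFieldType) (K : choiceType) (W : lmodType R) (f : K -> W) a x :
  linG (fun k => a *: f k) x = a *: linG f x.
Proof. by rewrite /linG scaler_sumr; apply: eq_bigr => k _; rewrite !scalerA mulrC. Qed.

Section Tens2.
Variables (R : numFieldType) (B : choiceType).
Lemma tens_linG_l (F1 : Vec R B -> Vec R B) x y : islin F1 ->
  linG (fun p => tens (F1 << p.1 >>) << p.2 >>) (tens x y) = tens (F1 x) y.
Proof. move=> H; exact: (tens_linG_bil (F1:=F1) (F2:=id) x y H (fun a u v => erefl)). Qed.
Lemma tens_linG_r (F2 : Vec R B -> Vec R B) x y : islin F2 ->
  linG (fun p => tens << p.1 >> (F2 << p.2 >>)) (tens x y) = tens x (F2 y).
Proof. move=> H; exact: (tens_linG_bil (F1:=id) (F2:=F2) x y (fun a u v => erefl) H). Qed.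
End Tens2.

Lemma tens0l (R : numFieldType) (B : choiceType) (y : Vec R B) : tens 0 y = 0.
Proof. exact: (islin0 (islin_tensl y)). Qed.
Lemma tens0r (R : numFieldType) (B : choiceType) (x : Vec R B) : tens x 0 = 0.
Proof. exact: (islin0 (islin_tensr x)). Qed.
Lemma mcoeff_linG (R : numFieldType) (K K2 : choiceType) (f : K -> {malg R[K2]}) g k :
  (linG f g)@_k = \sum_(i <- msupp g) g@_i * (f i)@_k.
Proof. rewrite /linG raddf_sum; apply: eq_bigr => i _; exact: mcoeffZ. Qed.
Lemma mcoeff_sum (R : numFieldType) (K : choiceType) (I : Type) (r : seq I) (P : pred I)
  (F : I -> {malg R[K]}) k :
  (\sum_(i <- r | P i) F i)@_k = \sum_(i <- r | P i) (F i)@_k.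
Proof. exact: raddf_sum. Qed.


Section Basic.
Variables (R : numFieldType) (B : choiceType) (G : gbasis B).
Implicit Types (x y : Vec R B).

Lemma coderE d Q x : coder G d Q -> inS G x ->
  cop G (Q x) = linG (fun p => tens (Q << p.1 >>) << p.2 >> +
                     koz R d (degS G p.1) *: tens << p.1 >> (Q << p.2 >>)) (cop G x).
Proof.
case=> _ _ _ H /H ->; rewrite linG_add; congr (_ + _).
by rewrite /linG; apply: eq_bigr => p _; rewrite scalerA.
Qed.

Lemma msupp_tens x y p : p \in msupp (tens x y) -> p.1 \in msupp x /\ p.2 \in msupp y.
Proof.
rewrite tensE => /msupp_linG [s sx] /msupp_linG [t ty].
by rewrite msuppU oner_eq0 inE => /eqP ->.
Qed.

Lemma msupp_mono m t : t \in msupp (mono R G m) -> t = sort (gb_le G) m /\ canon G t.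
Proof.
rewrite /mono; case: ifP => C; last by rewrite msupp0 inE.
move/(fsubsetP (msuppZ_le _ _)); rewrite msuppU oner_eq0 inE => /eqP ->; by [].
Qed.

Lemma msuppU1' (s : seq B) : msupp (<< s >> : Vec R B) = [fset s]%fset.
Proof. by rewrite msuppU oner_eq0. Qed.

Lemma inSU s : canon G s -> inS G (<< s >> : Vec R B).
Proof. by move=> C t; rewrite msuppU1' inE => /eqP ->. Qed.

Lemma homogU s : homog G (degS G s) (<< s >> : Vec R B).
Proof. by move=> t; rewrite msuppU1' inE => /eqP ->. Qed.

Lemma inS0 : inS G (0 : Vec R B).
Proof. by move=> t; rewrite msupp0 inE. Qed.

Lemma inSB x y : inS G x -> inS G y -> inS G (x - y).
Proof.
move=> Hx Hy t /(fsubsetP (msuppB_le _ _)); rewrite inE => /orP[/Hx|/Hy] //.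
Qed.

Lemma count_lt (b : seq bool) : false \in b -> (count id b < size b)%N.
Proof.
move=> H; rewrite -(count_predC id b) -{1}[count id b]addn0 ltn_add2l.
by rewrite -has_count; apply/hasP; exists false.
Qed.

Lemma msupp_cop_b s p : p \in msupp (cop_b R G s) ->
  [/\ canon G p.1, canon G p.2, (size p.1 < size s)%N & (size p.2 < size s)%N].
Proof.
case/msupp_sum => b /andP[_ /andP[tb fb]] H; move: H.
move/(fsubsetP (msuppZ_le _ _))/msupp_tens => [/msupp_mono [e1 c1] /msupp_mono [e2 c2]].
split => //; rewrite ?e1 ?e2 size_sort size_mask ?size_map ?size_tuple //.
  by move: (count_lt fb); rewrite size_tuple.
have : false \in map negb b by apply/mapP; exists true.
by move/count_lt; rewrite size_map size_tuple.
Qed.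

Lemma msupp_cop x p : inS G x -> p \in msupp (cop G x) ->
  exists s, [/\ canon G s, canon G p.1, canon G p.2, (size p.1 < size s)%N & (size p.2 < size s)%N].
Proof.
move=> Hx /msupp_linG [s /Hx Cs] /msupp_cop_b [*]; by exists s.
Qed.

Lemma copU s : cop G (<< s >> : Vec R B) = cop_b R G s.
Proof. by rewrite copE linG1. Qed.

End Basic.


Section Core.
Variables (R : numFieldType) (B : choiceType) (G : gbasis B).
Local Notation O := (outer G).

Lemma pr1E (w : Vec R (seq B)) :
  pr1 w = linG (fun u => if size u == 1%N then (<< head [::] u >> : Vec R B) else 0) w.
Proof.
rewrite /pr1 /linG big_mkcond; apply: eq_bigr => u _; case: ifP => _ //.
by rewrite scaler0.
Qed.

Lemma islin_pr1 : islin (@pr1 R B).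
Proof. by move=> a x y; rewrite !pr1E; exact: islin_linGf. Qed.

Lemma pr1_ext d D Dd (w : Vec R (seq B)) : coder G d D -> extends G d D Dd -> inS O w ->
  pr1 (Dd w) = D (pr1 w).
Proof.
move=> [LD _ _ _] [[LDd _ _ _] Hp] Hw.
rewrite (@linG_decomp _ _ _ Dd w LDd) (islin_linG _ _ islin_pr1) pr1E (islin_linG _ _ LD).
apply: eq_linG => u /Hw Cu; rewrite Hp //; case: ifP => _ //; by rewrite islin0.
Qed.

Lemma tens_linG_koz (c : int -> R) (F : Vec R (seq B) -> Vec R (seq B)) e a b :
  islin F -> homog O e a ->
  linG (fun q => c (degS O q.1) *: tens << q.1 >> (F << q.2 >>)) (tens a b) = c e *: tens a (F b).
Proof.
move=> LF Ha; rewrite tens_linG.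
rewrite (@eq_linG _ _ _ _ (fun s => c e *: linG (fun t => tens << s >> (F << t >>)) b)); last first.
  by move=> s Hs /=; rewrite -linG_scalef; apply: eq_linG => t _ /=; rewrite (Ha s Hs).
by rewrite linG_scalef -(tens_linG (fun q => tens << q.1 >> (F << q.2 >>))) tens_linG_r.
Qed.

Definition cofree := forall w : Vec R (seq B), inS O w -> pr1 w = 0 -> cop O w = 0 -> w = 0.

Lemma core d (D : Vec R B -> Vec R B) Dd (I : Vec R B -> Vec R (seq B)) : cofree -> coder G d D -> extends G d D Dd -> is_I G I ->
  forall x, inS G x -> Dd (I x) = I (D x).
Proof.
move=> CF HD HDd [HI HpI].
have [LD SD hD cD] := HD. have [HDdc pDd] := HDd. have [LDd SDd hDd cDd] := HDdc.
have [LI SI hI cI] := HI.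
have cIl : forall x, inS G x -> cop O (I x) = linG (fun p => tens (I << p.1 >>) (I << p.2 >>)) (cop G x) := cI.
pose F x := Dd (I x) - I (D x).
have LF : islin F by move=> a x y; rewrite /F LI LDd LD LI scalerBr opprD addrACA.
suff H0 : forall s, canon G s -> F << s >> = 0.
  move=> x Hx; apply/eqP; rewrite -subr_eq0; apply/eqP.
  rewrite -/(F x) (@linG_decomp _ _ _ F x LF); apply: linG_eq0 => s /Hx; exact: H0.
suff Hs : forall N s, (size s <= N)%N -> canon G s -> F << s >> = 0.
  by move=> s; apply: (Hs (size s)).
elim=> [|N IH] s Hsz Cs; first by case: s Hsz Cs.
have Us := inSU (R:=R) Cs.
apply: CF.
- by apply: inSB; [apply: SDd; apply: SI | apply: SI; apply: SD].
- rewrite (islinB islin_pr1) (pr1_ext HD HDd (SI _ Us)) HpI // HpI ?subrr //.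
  exact: SD.
apply/eqP; rewrite (islinB (islin_cop _)) subr_eq0; apply/eqP.
rewrite (coderE HDdc (SI _ Us)) (cIl _ Us) (cIl _ (SD _ Us)) (coderE HD Us) !copU !linG_linG.
apply: eq_linG => p /msupp_cop_b [C1 C2 S1 S2].
have E1 : Dd (I << p.1 >>) = I (D << p.1 >>).
  by apply/eqP; rewrite -subr_eq0; apply/eqP; apply: IH C1; rewrite -ltnS (leq_trans S1).
have E2 : Dd (I << p.2 >>) = I (D << p.2 >>).
  by apply/eqP; rewrite -subr_eq0; apply/eqP; apply: IH C2; rewrite -ltnS (leq_trans S2).
rewrite linG_add tens_linG_l // (@tens_linG_koz (koz R d) Dd _ _ (I << p.2 >>) LDd (hI _ _ (inSU C1) (@homogU R B G p.1))).
rewrite linGD linGZ (@tens_linG_bil R B (seq B) I I (D << p.1 >>) << p.2 >> LI LI).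
by rewrite (@tens_linG_bil R B (seq B) I I << p.1 >> (D << p.2 >>) LI LI) E1 E2.
Qed.
End Core.


Lemma perm_mask_split (T : eqType) (m : seq bool) (s : seq T) : size m = size s ->
  perm_eq (mask m s ++ mask (map negb m) s) s.
Proof.
elim: s m => [|y s IH] [|b m] //= [Hs]; case: b => /=.
  by rewrite perm_cons IH.
by rewrite -cat1s perm_catCA /= perm_cons IH.
Qed.

Lemma nth_in_mask (T : eqType) (x0 : T) (m : seq bool) (s : seq T) j :
  nth false m j -> (j < size s)%N -> nth x0 s j \in mask m s.
Proof.
elim: s m j => [|y s IH] [|b m] [|j] //=.
  by move=> -> _; rewrite inE eqxx.
by move=> Hj Hs; case: b; rewrite ?inE IH ?orbT.
Qed.

Lemma count2 (T : eqType) (x0 x : T) (s : seq T) i j :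
  (i < j)%N -> (j < size s)%N -> nth x0 s i = x -> nth x0 s j = x -> (1 < count_mem x s)%N.
Proof.
elim: s i j => [|y s IH] [|i] [|j] //=.
  move=> _ Hj -> Hn; rewrite eqxx add1n ltnS -has_count; apply/hasP.
  by exists (nth x0 s j); [exact: mem_nth | rewrite /= Hn].
move=> ij Hj Hi Hn'; rewrite addnC; apply: ltn_addr.
by apply: (IH i j); rewrite // -ltnS.
Qed.

Section Cofree.
Variables (R : numFieldType) (K : choiceType) (H : gbasis K).
Local Notation le := (gb_le H).
Hypotheses (Hrefl : reflexive le) (Htr : transitive le) (Hanti : antisymmetric le).

Lemma canon_sorted s : canon H s -> sorted le s.
Proof. by case/and4P. Qed.

Lemma canon_mask s m : canon H s -> mask m s != [::] -> canon H (mask m s).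
Proof.
case/and4P => _ ok srt cnt ne; rewrite /canon ne all_mask //= sorted_mask //=.
apply/allP => y ym; have ys := mem_mask ym; move/allP: cnt => /(_ y ys) /implyP H1.
by apply/implyP => od; apply: leq_trans (H1 od); exact: leq_count_mask.
Qed.

Lemma sort_sign_sorted s : sorted le s -> sort_sign R H s = 1.
Proof.
move=> Ss; rewrite /sort_sign /pair_sign; apply: big1 => i _; apply: big1 => j /andP[ij].
have x0 := tnth (in_tuple s) i.
rewrite (tnth_nth x0 (in_tuple s) i) (tnth_nth x0 (in_tuple s) j) /= => /negP [].
by move: (sorted_leq_nth Htr Hrefl x0 Ss) => /(_ i j (ltn_ord i) (ltn_ord j) (ltnW ij)).
Qed.

Lemma mono_mask s m : canon H s ->
  mono R H (mask m s) = if mask m s == [::] then 0 else << mask m s >>.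
Proof.
move=> Cs; have Ss := canon_sorted Cs; have Sm := sorted_mask Htr m Ss.
rewrite /mono (sorted_sort Htr Sm); case: eqP => [->|/eqP ne]; first by rewrite /canon eqxx.
by rewrite canon_mask // sort_sign_sorted // scale1r.
Qed.

Lemma cop_b_coef s q : canon H s ->
  (cop_b R H s)@_q = \sum_(b : (size s).-tuple bool | (true \in b) && (false \in b))
     unsh_sign R H b s * ((mask b s != [::]) && (mask (map negb b) s != [::]) &&
                          ((mask b s, mask (map negb b) s) == q))%:R.
Proof.
move=> Cs; rewrite /cop_b mcoeff_sum; apply: eq_bigr => b _.
rewrite mcoeffZ !mono_mask //; congr (_ * _).
case: eqP => _; case: eqP => _ /=; rewrite ?tens0l ?tens0r ?mcoeff0 //.
by rewrite tensU mcoeffU.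
Qed.

Lemma cop_b_other u x t : canon H u -> canon H (x :: t) -> u != x :: t ->
  (cop_b R H u)@_([:: x], t) = 0.
Proof.
move=> Cu Cxt ne; rewrite cop_b_coef //; apply: big1 => b _.
case: andP => [[_ /eqP [e1 e2]]|_]; last by rewrite mulr0.
exfalso; move/negP: ne; apply; apply/eqP.
apply: (sorted_eq Htr Hanti); rewrite ?canon_sorted //.
by rewrite perm_sym -[x :: t]/([:: x] ++ t) -e1 -e2; apply: perm_mask_split; rewrite size_tuple.
Qed.

Lemma unsh_one u x t b : canon H u -> u = x :: t -> mask b u = [:: x] ->
  size b = size u -> unsh_sign R H b u = 1.
Proof.
move=> Cu Eu Em Sb; have Su := canon_sorted Cu.
rewrite /unsh_sign /pair_sign; apply: big1 => i _; apply: big1 => j /andP[ij /andP[_ bj]].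
have x0 := tnth (in_tuple u) i.
rewrite (tnth_nth x0 (in_tuple u) i) (tnth_nth x0 (in_tuple u) j) /=.
have hj : nth x0 u j = x.
  have := nth_in_mask x0 bj (ltn_ord j); rewrite Em inE => /eqP.
  done.
have h0 : nth x0 u 0 = x by rewrite Eu.
have hi : nth x0 u i = x.
  have usz : (0 < size u)%N by rewrite Eu.
  apply: Hanti; apply/andP; split.
    by rewrite -hj; move: (sorted_leq_nth Htr Hrefl x0 Su) => /(_ i j (ltn_ord i) (ltn_ord j) (ltnW ij)).
  by rewrite -{1}h0; move: (sorted_leq_nth Htr Hrefl x0 Su) => /(_ 0%N i usz (ltn_ord i) (leq0n i)).
have c2 := count2 ij (ltn_ord j) hi hj.
have xu : x \in u by rewrite Eu inE eqxx.
case/and4P: Cu => _ _ _ /allP /(_ x xu) /implyP odd_c.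
rewrite hi hj /koz; case: ifP => // /andP [od _].
by have := odd_c od; rewrite leqNgt c2.
Qed.

Lemma cop_b_self x t : canon H (x :: t) -> t != [::] ->
  0 < (cop_b R H (x :: t))@_([:: x], t).
Proof.
move=> Cu tne; rewrite cop_b_coef //.
have [a [t' Et]] : exists a t', t = a :: t' by move: tne; clear Cu; case: t => // a t' _; exists a, t'.
pose b0 : (size (x :: t)).-tuple bool := [tuple of true :: nseq (size t) false].
have b0c : (true \in b0) && (false \in b0).
  by rewrite /b0 /= Et /= !in_cons !eqxx.
rewrite (bigD1 b0) //.
have m1 : mask b0 (x :: t) = [:: x] by rewrite /= mask_false.
have m2 : mask (map negb b0) (x :: t) = t by rewrite /= map_nseq mask_true ?size_nseq.
rewrite m1 m2 tne eqxx /= mulr1 (unsh_one Cu (erefl _) m1) ?size_tuple //.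
rewrite ltr_pwDl // ?ltr01 // sumr_ge0 // => b /andP[_ _].
case: andP => [[_ /eqP [e1 _]]|_]; last by rewrite mulr0.
by rewrite mulr1 (unsh_one Cu (erefl _) e1) ?size_tuple.
Qed.

End Cofree.

Section Lex.
Variables (B : eqType) (le : rel B).
Lemma lexrel_refl : reflexive (lexrel le).
Proof. by elim => //= a s IH; rewrite eqxx. Qed.

Lemma lexrel_anti : antisymmetric le -> antisymmetric (lexrel le).
Proof.
move=> Ha; elim=> [|a s IH] [|b t] //=.
case: (eqVneq a b) => [<-|nab]; first by move=> /IH ->.
move=> Hab; case/negP: nab; apply/eqP; exact: Ha.
Qed.

Lemma lexrel_trans : antisymmetric le -> transitive le -> transitive (lexrel le).
Proof.
move=> Ha Ht y x z; elim: x y z => [|a s IH] [|b t] [|c u] //=.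
case: (eqVneq a b) => [<-|nab].
  case: (eqVneq a c) => [_|nac]; first exact: IH.
  by [].
case: (eqVneq b c) => [<-|nbc]; first by rewrite (negPf nab).
case: (eqVneq a c) => [eac|_]; last exact: Ht.
move: nbc; rewrite -eac => nba h1 h2; case/negP: nba; apply/eqP; apply: Ha; by rewrite h1 h2.
Qed.
End Lex.

Lemma cofree_outer (R : numFieldType) (B : choiceType) (G : gbasis B) :
  reflexive (gb_le G) -> transitive (gb_le G) -> antisymmetric (gb_le G) -> cofree R G.
Proof.
move=> Hr Ht Ha.
have Or : reflexive (gb_le (outer G)) by exact: lexrel_refl.
have Ot : transitive (gb_le (outer G)) by exact: lexrel_trans.
have Oa : antisymmetric (gb_le (outer G)) by exact: lexrel_anti.
move=> w Hw Hp Hc; apply/malgP => u; rewrite mcoeff0; apply/eqP; rewrite mcoeff_eq0.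
apply/negP => uw; have Cu := Hw u uw.
case Hs: (size u == 1%N).
  move/(congr1 (mcoeff (head [::] u))): Hp; rewrite mcoeff0 pr1E mcoeff_linG.
  rewrite (bigD1_seq u) ?fset_uniq //= Hs mcoeffU eqxx mulr1 big1 ?addr0.
    by move/eqP; rewrite mcoeff_eq0 uw.
  move=> u' ne; case: ifP => Hs'; last by rewrite mcoeff0 mulr0.
  rewrite mcoeffU; case: eqP => [eh|_]; last by rewrite mulr0.
  case/negP: ne; move: Hs Hs' eh; case: u {Cu uw} => [|a [|]] //; case: u' => [|a' [|]] //=.
  by move=> _ _ ->.
case: u Cu Hs uw => [|x t] Cu Hs uw; first by case/and4P: Cu.
have tne : t != [::] by case: t Cu Hs {uw}.
move/(congr1 (mcoeff ([:: x], t))): Hc; rewrite mcoeff0 copE mcoeff_linG.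
rewrite (bigD1_seq (x :: t)) ?fset_uniq //= big_seq_cond big1 ?addr0.
  move/eqP; rewrite mulf_eq0 => /orP [|]; first by rewrite mcoeff_eq0 uw.
  by rewrite gt_eqF // (cop_b_self R Or Ot Oa Cu tne).
move=> u' /andP[u'w ne]; rewrite (cop_b_other R Or Ot Oa (Hw _ u'w) Cu ne).
by rewrite mulr0.
Qed.


Lemma main_of_cofree (R : numFieldType) (n k : nat)
  (degV : 'I_n -> int) (degE : 'I_k -> int)
  (ME : Vec R 'I_k -> Vec R 'I_k) (MV : Vec R 'I_n -> Vec R 'I_n)
  (Phi : seq 'I_k -> Vec R 'I_n -> Vec R 'I_n)
  (PhiD : seq 'I_k -> Vec R (seq 'I_n) -> Vec R (seq 'I_n))
  (MVd : Vec R (seq 'I_n) -> Vec R (seq 'I_n))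
  (I : Vec R 'I_n -> Vec R (seq 'I_n))
  (Tt : Vec R (seq 'I_n) -> Vec R 'I_k) :
  cofree R (fin_gb degV) ->
  LieInf (fin_gb degE) ME ->
  LieInf (fin_gb degV) MV ->
  action (fin_gb degE) (fin_gb degV) ME MV Phi ->
  (forall m, canon (fin_gb degE) m ->
     extends (fin_gb degV) (degS (fin_gb degE) m + 1) (Phi m) (PhiD m)) ->
  extends (fin_gb degV) 1 MV MVd ->
  is_I (fin_gb degV) I ->
  Oop (fin_gb degE) (outer (fin_gb degV)) ME MVd PhiD Tt ->
  Oop (fin_gb degE) (fin_gb degV) ME MV Phi (fun v => Tt (I v)).
Proof.
set GV := fin_gb degV; set GE := fin_gb degE; set O := outer GV.
move=> CF _ [HMV _] [Hact _] Hext HMVd HisI [[LT ST hT cT] ET].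
have [HI _] := HisI.
have [LI SI hI cI] := HI.
have cIl : forall x, inS GV x -> cop O (I x) = linG (fun p => tens (I << p.1 >>) (I << p.2 >>)) (cop GV x) := cI.
have cTl : forall x, inS O x -> cop GE (Tt x) = linG (fun p => tens (Tt << p.1 >>) (Tt << p.2 >>)) (cop O x) := cT.
split.
  split.
  - by move=> a x y; rewrite LI LT.
  - by move=> x Hx; apply: ST; apply: SI.
  - by move=> d x Hx Hd; apply: hT; [apply: SI | apply: hI].
  move=> x Hx.
  change (cop GE (Tt (I x)) = linG (fun p => tens (Tt (I << p.1 >>)) (Tt (I << p.2 >>))) (cop GV x)).
  rewrite (cTl _ (SI _ Hx)) (cIl _ Hx) linG_linG; apply: eq_linG => p _.
  exact: (@tens_linG_bil R _ _ Tt Tt _ _ LT LT).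
move=> v Hv; rewrite ET; last by apply: SI.
congr (Tt _); rewrite (islinD LI).
rewrite (@core R _ GV 1 MV MVd I CF HMV HMVd HisI v Hv); congr (_ + _).
change (linG (fun q => Phi_at PhiD (Tt << q.1 >>) << q.2 >>) (cop O (I v)) =
        I (linG (fun p => Phi_at Phi (Tt (I << p.1 >>)) << p.2 >>) (cop GV v))).
rewrite (cIl _ Hv) linG_linG (islin_linG _ _ LI); apply: eq_linG => p Hp.
have [s [_ C1 C2 _ _]] := msupp_cop Hv Hp.
have Ia := SI _ (inSU C1).
rewrite tens_linG.
rewrite (@eq_linG _ _ _ _ (fun s => linG (fun m => PhiD m (I << p.2 >>)) (Tt << s >>))); last first.
  move=> s' Hs' /=; rewrite /Phi_at linG_swap; apply: eq_linG => m Hm /=.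
  have Cm : canon GE m by apply: (ST _ (inSU (Ia _ Hs'))).
  have [[LP _ _ _] _] := Hext m Cm.
  by rewrite -(linG_decomp _ LP).
rewrite -linG_linG -(linG_decomp _ LT) /Phi_at (islin_linG _ _ LI).
apply: eq_linG => m Hm.
have Cm : canon GE m by apply: (ST _ (SI _ (inSU C1))).
by rewrite (@core R _ GV _ (Phi m) (PhiD m) I CF (Hact m Cm) (Hext m Cm) HisI _ (inSU C2)).
Qed.

Unset Implicit Arguments.

Theorem mainTheorem5 (R : numFieldType) (n k : nat)
  (degV : 'I_n -> int) (degE : 'I_k -> int)
  (ME : Vec R 'I_k -> Vec R 'I_k) (MV : Vec R 'I_n -> Vec R 'I_n)
  (Phi : seq 'I_k -> Vec R 'I_n -> Vec R 'I_n)
  (PhiD : seq 'I_k -> Vec R (seq 'I_n) -> Vec R (seq 'I_n))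
  (MVd : Vec R (seq 'I_n) -> Vec R (seq 'I_n))
  (I : Vec R 'I_n -> Vec R (seq 'I_n))
  (Tt : Vec R (seq 'I_n) -> Vec R 'I_k) :
  LieInf (fin_gb degE) ME ->
  LieInf (fin_gb degV) MV ->
  action (fin_gb degE) (fin_gb degV) ME MV Phi ->
  (forall m, canon (fin_gb degE) m ->
     extends (fin_gb degV) (degS (fin_gb degE) m + 1) (Phi m) (PhiD m)) ->
  extends (fin_gb degV) 1 MV MVd ->
  is_I (fin_gb degV) I ->
  Oop (fin_gb degE) (outer (fin_gb degV)) ME MVd PhiD Tt ->
  Oop (fin_gb degE) (fin_gb degV) ME MV Phi (fun v => Tt (I v)).
Proof.
apply: main_of_cofree; apply: cofree_outer.
- by move=> i /=.
- by move=> j i l /= h1 h2; apply: leq_trans h1 h2.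
- by move=> i j /= /anti_leq /ord_inj.
Qed.
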